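(* Let $n\ge1$ and let $\boldsymbol{\theta}\mapsto\ket{\phi(\boldsymbol{\theta})}$, $\boldsymbol{\theta}\in\mathbb{R}^m$, be any smooth map into normalized pure states of $n$ qubits. Let $\nu$ be a unitary 2-design on $U(2^n)$. For $U\in U(2^n)$ and $\boldsymbol{s}\in\{0,1\}^n$ let $p_{\boldsymbol{s}}^U(\boldsymbol{\theta}) := \bra{\phi(\boldsymbol{\theta})}U^\dagger\Pi_{\boldsymbol{s}}U\ket{\phi(\boldsymbol{\theta})}$ with $\Pi_{\boldsymbol{s}}=\ket{\boldsymbol{s}}\bra{\boldsymbol{s}}$. Then for all $\boldsymbol{\theta}$ and all $i,j$, $$[\mathcal{F}_Q(\boldsymbol{\theta})]_{ij} = 2(2^n+1)\sum_{\boldsymbol{s}\in\{0,1\}^n}\mathbb{E}_{U\sim\nu}\left[\frac{\partial p_{\boldsymbol{s}}^U(\boldsymbol{\theta})}{\partial\theta_i}\frac{\partial p_{\boldsymbol{s}}^U(\boldsymbol{\theta})}{\partial\theta_j}\right].$$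
   Context: The quantum Fisher information matrix is the $m\times m$ real matrix with entries $$[\mathcal{F}_Q(\boldsymbol{\theta})]_{ij} = 4\,\mathrm{Re}\left[\frac{\partial\bra{\phi(\boldsymbol{\theta})}}{\partial\theta_i}\frac{\partial\ket{\phi(\boldsymbol{\theta})}}{\partial\theta_j} - \frac{\partial\bra{\phi(\boldsymbol{\theta})}}{\partial\theta_i}\ket{\phi(\boldsymbol{\theta})}\bra{\phi(\boldsymbol{\theta})}\frac{\partial\ket{\phi(\boldsymbol{\theta})}}{\partial\theta_j}\right].$$ A probability distribution $\nu$ supported on a set of unitaries $S\subseteq U(d)$ is a unitary $k$-design if $\mathbb{E}_{V\sim\nu}[V^{\otimes k}OV^{\dagger\otimes k}] = \mathbb{E}_{U\sim\mu_H}[U^{\otimes k}OU^{\dagger\otimes k}]$ for all operators $O$ on $(\mathbb{C}^d)^{\otimes k}$, where $\mu_H$ is the Haar probability measure on $U(d)$; here $d=2^n$, $k=2$. *)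

(* Defs.v *)
From HB Require Import structures.
From mathcomp Require Import all_boot all_order all_algebra.
From mathcomp Require Import all_classical all_reals all_analysis.
From mathcomp Require Import complex.
From mathcomp Require mxtens.
Set Implicit Arguments. Unset Strict Implicit. Unset Printing Implicit Defensive.
Import Order.TTheory GRing.Theory Num.Theory.
Import numFieldNormedType.Exports.
Local Open Scope classical_set_scope.
Local Open Scope ring_scope.

Section QFI.
Variable R : realType.
Local Notation C := R[i].

Definition adj {p q : nat} (A : 'M[C]_(p, q)) : 'M[C]_(q, p) :=
  (map_mx Num.conj A)^T.

Definition is_unitary {D : nat} (U : 'M[C]_D) : Prop :=
  U *m adj U = 1%:M.

Fixpoint iterD {m : nat} (f : 'rV[R]_m -> R) (vs : seq 'rV[R]_m)
  : 'rV[R]_m -> R :=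
  match vs with
  | [::] => f
  | v :: vs' => 'D_v (iterD f vs')
  end.

Definition smooth_fun {m : nat} (f : 'rV[R]_m -> R) : Prop :=
  forall (vs : seq 'rV[R]_m) (x : 'rV[R]_m), differentiable (iterD f vs) x.

Definition pd {m : nat} (i : 'I_m) (f : 'rV[R]_m -> R) (x : 'rV[R]_m) : R :=
  'D_(delta_mx 0 i) f x.

Definition smooth_state {m D : nat} (phi : 'rV[R]_m -> 'cV[C]_D) : Prop :=
  forall k : 'I_D, smooth_fun (fun t => complex.Re (phi t k 0)) /\
                   smooth_fun (fun t => complex.Im (phi t k 0)).

Definition dstate {m D : nat} (i : 'I_m) (phi : 'rV[R]_m -> 'cV[C]_D)
  (x : 'rV[R]_m) : 'cV[C]_D :=
  \col_k (Complex (pd i (fun t => complex.Re (phi t k 0)) x)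
                  (pd i (fun t => complex.Im (phi t k 0)) x)).

Definition QFI {m D : nat} (phi : 'rV[R]_m -> 'cV[C]_D) (x : 'rV[R]_m)
  (i j : 'I_m) : R :=
  4 * complex.Re ((adj (dstate i phi x) *m dstate j phi x) 0 0
          - (adj (dstate i phi x) *m phi x *m adj (phi x)
               *m dstate j phi x) 0 0).

Definition pU {m D : nat} (s : 'I_D) (U : 'M[C]_D)
  (phi : 'rV[R]_m -> 'cV[C]_D) (x : 'rV[R]_m) : R :=
  complex.Re ((adj (phi x) *m adj U *m delta_mx s s *m U *m phi x) 0 0).

Definition CE {d} {T : measurableType d} (P : probability T R) (f : T -> C)
  : C :=
  Complex (\int[P]_w complex.Re (f w)) (\int[P]_w complex.Im (f w)).

(* a random unitary: a unitary-valued map on a probability space whose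
   entries are measurable; its law is a probability distribution on U(D) *)
Definition random_unitary {d} {T : measurableType d} {D : nat}
  (U : T -> 'M[C]_D) : Prop :=
  (forall w, is_unitary (U w)) /\
  (forall a b : 'I_D, measurable_fun setT (fun w => complex.Re (U w a b)) /\
                      measurable_fun setT (fun w => complex.Im (U w a b))).

Definition splitRI {D : nat} (M : 'M[C]_D) : 'M[R]_D * 'M[R]_D :=
  (map_mx (@complex.Re R) M, map_mx (@complex.Im R) M).

(* H is Haar-distributed: a random unitary whose law is left-invariant,
   i.e. V H and H have the same law for every unitary V (equality of laws
   tested against continuous functions on the matrix space) *)
Definition is_haar {d} {T : measurableType d} (P : probability T R)
  {D : nat} (H : T -> 'M[C]_D) : Prop :=
  random_unitary H /\
  forall V : 'M[C]_D, is_unitary V ->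
  forall g : 'M[R]_D * 'M[R]_D -> R, continuous g ->
    \int[P]_w g (splitRI (V *m H w)) = \int[P]_w g (splitRI (H w)).

Definition twirl2 {D : nat} (U : 'M[C]_D) (O : 'M[C]_(D * D)) : 'M[C]_(D * D) :=
  mxtens.tensmx U U *m O *m adj (mxtens.tensmx U U).

Definition is_2design {d} {T : measurableType d} (P : probability T R)
  {D : nat} (U : T -> 'M[C]_D) : Prop :=
  random_unitary U /\
  exists (d' : measure_display) (T' : measurableType d')
         (P' : probability T' R) (H : T' -> 'M[C]_D),
    is_haar P' H /\
    forall (O : 'M[C]_(D * D)) (a b : 'I_(D * D)),
      CE P (fun w => twirl2 (U w) O a b) = CE P' (fun w => twirl2 (H w) O a b).

End QFI.

(* Main.v *)
Require Import Defs.
From HB Require Import structures.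
From mathcomp Require Import all_boot all_order all_algebra.
From mathcomp Require Import all_classical all_reals all_analysis.
From mathcomp Require Import complex.
From mathcomp Require mxtens.
From mathcomp Require Import ring lra.
Import Order.TTheory GRing.Theory Num.Theory.
Import numFieldNormedType.Exports.
Local Open Scope classical_set_scope.
Local Open Scope ring_scope.

Set Implicit Arguments. Unset Strict Implicit. Unset Printing Implicit Defensive.

Section Aux.
Variable R : realType.
Local Notation C := R[i].
Local Notation Re := (@complex.Re R).
Local Notation Im := (@complex.Im R).

Lemma conjE (x : C) : Num.conj x = Complex (Re x) (- Im x).
Proof. by case: x. Qed.
Lemma ReM (x y : C) : Re (x * y) = Re x * Re y - Im x * Im y.
Proof. by case: x => a b; case: y => c d. Qed.
Lemma ImM (x y : C) : Im (x * y) = Re x * Im y + Im x * Re y.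
Proof. by case: x => a b; case: y => c d. Qed.
Lemma ReD (x y : C) : Re (x + y) = Re x + Re y.
Proof. by case: x => a b; case: y => c d. Qed.
Lemma ImD (x y : C) : Im (x + y) = Im x + Im y.
Proof. by case: x => a b; case: y => c d. Qed.
Lemma ReN (x : C) : Re (- x) = - Re x.
Proof. by case: x. Qed.
Lemma ImN (x : C) : Im (- x) = - Im x.
Proof. by case: x. Qed.
Lemma ReJ (x : C) : Re (Num.conj x) = Re x.
Proof. by case: x. Qed.
Lemma ImJ (x : C) : Im (Num.conj x) = - Im x.
Proof. by case: x. Qed.
Lemma Re0 : Re 0 = 0. Proof. by []. Qed.
Lemma Im0 : Im 0 = 0. Proof. by []. Qed.
Lemma Re1 : Re 1 = 1. Proof. by []. Qed.
Lemma Im1 : Im 1 = 0. Proof. by []. Qed.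

Lemma Re_sum I (r : seq I) (P : pred I) (F : I -> C) :
  Re (\sum_(i <- r | P i) F i) = \sum_(i <- r | P i) Re (F i).
Proof. by apply: (big_morph _ ReD Re0). Qed.
Lemma Im_sum I (r : seq I) (P : pred I) (F : I -> C) :
  Im (\sum_(i <- r | P i) F i) = \sum_(i <- r | P i) Im (F i).
Proof. by apply: (big_morph _ ImD Im0). Qed.

Lemma complex_eqP (x y : C) : Re x = Re y -> Im x = Im y -> x = y.
Proof. by case: x => a b; case: y => c d /= -> ->. Qed.

Lemma sum_tens (V : nmodType) m n (F : 'I_(m * n) -> V) :
  \sum_x F x = \sum_(i < m) \sum_(j < n) F (mxtens.mxtens_index (i, j)).
Proof.
rewrite pair_big /= (reindex (@mxtens.mxtens_index m n)) /=; last first.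
  by exists (@mxtens.mxtens_unindex m n) => x _;
    [apply: mxtens.mxtens_indexK | apply: mxtens.mxtens_unindexK].
by apply: eq_bigr => -[i j] _.
Qed.

Lemma ix_eq m n (p q : 'I_m * 'I_n) :
  (mxtens.mxtens_index p == mxtens.mxtens_index q) = (p == q).
Proof. exact/inj_eq/(can_inj (@mxtens.mxtens_indexK m n)). Qed.

Lemma adjE p q (A : 'M[C]_(p, q)) i j : adj A i j = Num.conj (A j i).
Proof. by rewrite !mxE. Qed.

Lemma adj_mul p q r (A : 'M[C]_(p, q)) (B : 'M[C]_(q, r)) :
  adj (A *m B) = adj B *m adj A.
Proof.
apply/matrixP => i j; rewrite !mxE rmorph_sum; apply: eq_bigr => k _.
by rewrite !mxE rmorphM mulrC.
Qed.

Lemma adjK p q (A : 'M[C]_(p, q)) : adj (adj A) = A.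
Proof. by apply/matrixP => i j; rewrite !mxE conjCK. Qed.

Lemma adjD p q (A B : 'M[C]_(p, q)) : adj (A + B) = adj A + adj B.
Proof. by apply/matrixP => i j; rewrite !mxE rmorphD. Qed.

Lemma adj_tens m n p q (A : 'M[C]_(m, n)) (B : 'M[C]_(p, q)) :
  adj (mxtens.tensmx A B) = mxtens.tensmx (adj A) (adj B).
Proof. by apply/matrixP => i j; rewrite !mxE rmorphM. Qed.

Lemma tens11 m n :
  mxtens.tensmx (1%:M : 'M[C]_m) (1%:M : 'M[C]_n) = 1%:M.
Proof.
apply/matrixP => x y.
case: (mxtens.mxtens_indexP x) => i j; case: (mxtens.mxtens_indexP y) => k l.
rewrite mxtens.tensmxE !mxE ix_eq xpair_eqE.
by case: (i == k); case: (j == l); rewrite /= ?mulr1 ?mulr0 ?mul0r.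
Qed.

Lemma unitaryC D (U : 'M[C]_D) : Defs.is_unitary U -> adj U *m U = 1%:M.
Proof. by move=> hU; apply: mulmx1C. Qed.

Lemma unitary_tens D (U : 'M[C]_D) : Defs.is_unitary U ->
  Defs.is_unitary (mxtens.tensmx U U).
Proof. by move=> hU; rewrite /Defs.is_unitary adj_tens mxtens.tensmx_mul hU tens11. Qed.

Lemma unitary_tensC D (U : 'M[C]_D) : Defs.is_unitary U ->
  adj (mxtens.tensmx U U) *m mxtens.tensmx U U = 1%:M.
Proof. by move=> hU; rewrite adj_tens mxtens.tensmx_mul unitaryC // tens11. Qed.

End Aux.

Section Closure.
Variable R : realType.
Local Notation C := R[i].
Local Notation Re := (@complex.Re R).
Local Notation Im := (@complex.Im R).
Variable S : Type.
Variable Q : (S -> R) -> Prop.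
Record closedQ := ClosedQ {
  QD : forall f g, Q f -> Q g -> Q (fun s => f s + g s);
  QM : forall f g, Q f -> Q g -> Q (fun s => f s * g s);
  QN : forall f, Q f -> Q (fun s => - f s);
  Qc : forall c, Q (fun _ => c) }.
Hypothesis hQ : closedQ.

Definition cQ (F : S -> C) := Q (fun s => Re (F s)) /\ Q (fun s => Im (F s)).

Lemma cQD F G : cQ F -> cQ G -> cQ (fun s => F s + G s).
Proof.
move=> [F1 F2] [G1 G2]; split.
  have -> : (fun s => Re (F s + G s)) = (fun s => Re (F s) + Re (G s)).
    by apply: boolp.funext => s; rewrite ReD.
  exact: (QD hQ).
have -> : (fun s => Im (F s + G s)) = (fun s => Im (F s) + Im (G s)).
  by apply: boolp.funext => s; rewrite ImD.
exact: (QD hQ).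
Qed.

Lemma cQM F G : cQ F -> cQ G -> cQ (fun s => F s * G s).
Proof.
move=> [F1 F2] [G1 G2]; split.
  have -> : (fun s => Re (F s * G s)) =
     (fun s => Re (F s) * Re (G s) + - (Im (F s) * Im (G s))).
    by apply: boolp.funext => s; rewrite ReM.
  by apply: (QD hQ); [apply: (QM hQ) | apply: (QN hQ); apply: (QM hQ)].
have -> : (fun s => Im (F s * G s)) =
   (fun s => Re (F s) * Im (G s) + Im (F s) * Re (G s)).
  by apply: boolp.funext => s; rewrite ImM.
by apply: (QD hQ); apply: (QM hQ).
Qed.

Lemma cQJ F : cQ F -> cQ (fun s => Num.conj (F s)).
Proof.
move=> [F1 F2]; split.
  have -> : (fun s => Re (Num.conj (F s))) = (fun s => Re (F s)).
    by apply: boolp.funext => s; rewrite ReJ.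
  exact: F1.
have -> : (fun s => Im (Num.conj (F s))) = (fun s => - Im (F s)).
  by apply: boolp.funext => s; rewrite ImJ.
exact: (QN hQ).
Qed.

Lemma cQc (c : C) : cQ (fun _ => c).
Proof. by split; apply: (Qc hQ). Qed.

Lemma cQ_sum I (r : seq I) (P : pred I) (F : I -> S -> C) :
  (forall i, cQ (F i)) -> cQ (fun s => \sum_(i <- r | P i) F i s).
Proof.
move=> hF; elim: r => [|a r IH].
  have -> : (fun s => \sum_(i <- [::] | P i) F i s) = (fun _ => 0).
    by apply: boolp.funext => s; rewrite big_nil.
  exact: cQc.
case Pa: (P a).
  have -> : (fun s => \sum_(i <- a :: r | P i) F i s) =
     (fun s => F a s + \sum_(i <- r | P i) F i s).
    by apply: boolp.funext => s; rewrite big_cons Pa.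
  exact: cQD.
have -> : (fun s => \sum_(i <- a :: r | P i) F i s) =
   (fun s => \sum_(i <- r | P i) F i s).
  by apply: boolp.funext => s; rewrite big_cons Pa.
exact: IH.
Qed.

Definition cQmx p q (A : S -> 'M[C]_(p, q)) := forall i j, cQ (fun s => A s i j).

Lemma cQmx_mul p q r (A : S -> 'M[C]_(p, q)) (B : S -> 'M[C]_(q, r)) :
  cQmx A -> cQmx B -> cQmx (fun s => A s *m B s).
Proof.
move=> hA hB i j.
have -> : (fun s => (A s *m B s) i j) = (fun s => \sum_k A s i k * B s k j).
  by apply: boolp.funext => s; rewrite mxE.
by apply: cQ_sum => k; apply: cQM.
Qed.

Lemma cQmx_adj p q (A : S -> 'M[C]_(p, q)) : cQmx A -> cQmx (fun s => adj (A s)).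
Proof.
move=> hA i j.
have -> : (fun s => adj (A s) i j) = (fun s => Num.conj (A s j i)).
  by apply: boolp.funext => s; rewrite !mxE.
exact: cQJ.
Qed.

Lemma cQmx_tens m n p q (A : S -> 'M[C]_(m, n)) (B : S -> 'M[C]_(p, q)) :
  cQmx A -> cQmx B -> cQmx (fun s => mxtens.tensmx (A s) (B s)).
Proof.
move=> hA hB i j.
have -> : (fun s => mxtens.tensmx (A s) (B s) i j) =
  (fun s => A s (mxtens.mxtens_unindex i).1 (mxtens.mxtens_unindex j).1 *
            B s (mxtens.mxtens_unindex i).2 (mxtens.mxtens_unindex j).2).
  by apply: boolp.funext => s; rewrite !mxE.
exact: cQM.
Qed.

Lemma cQmx_cst p q (M : 'M[C]_(p, q)) : cQmx (fun _ => M).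
Proof. by move=> i j; apply: cQc. Qed.

Lemma cQ_twirl D (A : S -> 'M[C]_D) (O : 'M[C]_(D * D)) :
  cQmx A -> cQmx (fun s => twirl2 (A s) O).
Proof.
move=> hA; rewrite /twirl2.
apply: cQmx_mul; last by apply: cQmx_adj; apply: cQmx_tens.
by apply: cQmx_mul; [apply: cQmx_tens | apply: cQmx_cst].
Qed.

End Closure.

Section Expect.
Variable R : realType.
Local Notation C := R[i].
Local Notation Re := (@complex.Re R).
Local Notation Im := (@complex.Im R).
Variable d : measure_display.
Variable T : measurableType d.
Variable P : probability T R.

Definition Qmb (f : T -> R) := measurable_fun setT f /\ exists K, forall w, `|f w| <= K.

Lemma QmbD f g : Qmb f -> Qmb g -> Qmb (fun s => f s + g s).
Proof.
move=> [mf [K1 h1]] [mg [K2 h2]]; split; first exact: measurable_realfun.measurable_funD.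
by exists (K1 + K2) => w; apply: le_trans (ler_normD _ _) _; apply: lerD.
Qed.

Lemma QmbM f g : Qmb f -> Qmb g -> Qmb (fun s => f s * g s).
Proof.
move=> [mf [K1 h1]] [mg [K2 h2]]; split; first exact: measurable_realfun.measurable_funM.
exists (K1 * K2) => w; rewrite normrM; apply: ler_pM => //.
Qed.

Lemma QmbN f : Qmb f -> Qmb (fun s => - f s).
Proof.
move=> [mf [K1 h1]]; split; first exact: measurable_realfun.measurable_funN.
by exists K1 => w; rewrite normrN.
Qed.

Lemma Qmbc c : Qmb (fun _ => c).
Proof. by split; [exact: measurable_cst | exists `|c|]. Qed.

Lemma Qmb_closed : closedQ Qmb.
Proof. exact: ClosedQ QmbD QmbM QmbN Qmbc. Qed.

Definition good := cQ Qmb.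

Lemma Qmb_int f : Qmb f -> P.-integrable setT (EFin \o f).
Proof.
move=> [mf [K hK]]; apply: measurable_bounded_integrable => //.
  by apply: (le_lt_trans (probability_le1 P measurableT)); exact: ltry.
exists K; split; first by rewrite num_real.
move=> M KM x _ /=; apply: le_trans (hK x) _; exact: ltW.
Qed.

Lemma CE_add F G : good F -> good G ->
  CE P (fun w => F w + G w) = CE P F + CE P G.
Proof.
move=> [F1 F2] [G1 G2]; rewrite /CE; apply: complex_eqP => /=.
  under eq_Rintegral do rewrite ReD.
  by rewrite RintegralD //; apply: Qmb_int.
under eq_Rintegral do rewrite ImD.
by rewrite RintegralD //; apply: Qmb_int.
Qed.

Lemma CE_mulc (c : C) F : good F -> CE P (fun w => c * F w) = c * CE P F.
Proof.
move=> [F1 F2]; rewrite /CE; apply: complex_eqP => /=.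
  under eq_Rintegral do rewrite ReM.
  rewrite RintegralB //; try by apply: Qmb_int; apply: QmbM => //; apply: Qmbc.
  rewrite !RintegralZl //; try by apply: Qmb_int.
  by rewrite ReM.
under eq_Rintegral do rewrite ImM.
rewrite RintegralD //; try by apply: Qmb_int; apply: QmbM => //; apply: Qmbc.
rewrite !RintegralZl //; try by apply: Qmb_int.
by rewrite ImM.
Qed.

Lemma CE_cst (c : C) : CE P (fun _ => c) = c.
Proof.
have h1 : (P : measure T R) setT = 1%E by exact: probability_setT.
rewrite /CE; apply: complex_eqP => /=;
  by rewrite Rintegral_cst // h1 /= mulr1.
Qed.

Lemma CE_sum I (r : seq I) (Pr : pred I) (F : I -> T -> C) :
  (forall i, good (F i)) ->
  CE P (fun w => \sum_(i <- r | Pr i) F i w) = \sum_(i <- r | Pr i) CE P (F i).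
Proof.
move=> hF; elim: r => [|a r IH].
  rewrite big_nil -[in RHS](CE_cst 0); congr (CE P _); apply: boolp.funext => w; by rewrite big_nil.
rewrite big_cons; case Pa: (Pr a).
  rewrite -IH -CE_add //; last first.
    exact: (cQ_sum Qmb_closed).
  by congr (CE P _); apply: boolp.funext => w; rewrite big_cons Pa.
by rewrite -IH; congr (CE P _); apply: boolp.funext => w; rewrite big_cons Pa.
Qed.

End Expect.

Section Haar1.
Variable R : realType.
Local Notation C := R[i].
Local Notation Re := (@complex.Re R).
Local Notation Im := (@complex.Im R).

Lemma unitary_bound D (U : 'M[C]_D) a b : Defs.is_unitary U ->
  `|Re (U a b)| <= 1 /\ `|Im (U a b)| <= 1.
Proof.
move=> hU.
have e : \sum_c (Re (U a c) ^+ 2 + Im (U a c) ^+ 2) = 1.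
  have := congr1 (fun M : 'M[C]_D => Re (M a a)) hU => /=.
  rewrite !mxE eqxx /= Re_sum => <-; apply: eq_bigr => c _.
  by rewrite !mxE ReM ReJ ImJ; rewrite !expr2; lra.
have hb : Re (U a b) ^+ 2 + Im (U a b) ^+ 2 <= 1.
  rewrite -e (bigD1 b) //= lerDl; apply: sumr_ge0 => c _.
  by rewrite addr_ge0 // sqr_ge0.
by split; rewrite ler_norml; apply/andP; split; nra.
Qed.

Variable d : measure_display.
Variable T : measurableType d.
Variable P : probability T R.
Variable D : nat.
Variable H : T -> 'M[C]_D.
Hypothesis hH : is_haar P H.

Lemma good_H : cQmx (Qmb (T := T)) H.
Proof.
case: hH => -[hu hm] _ a b; split.
  split; first exact: (hm a b).1.
  by exists 1 => w; case: (unitary_bound a b (hu w)).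
split; first exact: (hm a b).2.
by exists 1 => w; case: (unitary_bound a b (hu w)).
Qed.

Lemma good_tw O x y : good (fun w => twirl2 (H w) O x y).
Proof. exact: (cQ_twirl (Qmb_closed R T) O good_H x y). Qed.

Definition Qct (f : 'M[R]_D * 'M[R]_D -> R) := continuous f.

Lemma Qct_closed : closedQ Qct.
Proof.
split.
- by move=> f g hf hg x; exact: (continuousD (hf x) (hg x)).
- by move=> f g hf hg x; exact: (continuousM (hf x) (hg x)).
- by move=> f hf x; exact: (continuousN (hf x)).
- by move=> c x; exact: cst_continuous.
Qed.

Definition mkC (XY : 'M[R]_D * 'M[R]_D) : 'M[C]_D :=
  \matrix_(a, b) Complex (XY.1 a b) (XY.2 a b).

Lemma mkC_split (M : 'M[C]_D) : mkC (splitRI M) = M.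
Proof. by apply/matrixP => a b; rewrite !mxE; case: (M a b). Qed.

Lemma Qct_mkC : cQmx Qct mkC.
Proof.
move=> a b; split.
  have -> : (fun XY => Re (mkC XY a b)) = (fun XY => XY.1 a b).
    by apply: boolp.funext => XY; rewrite mxE.
  move=> x; apply: (continuous_comp (f := fst) (g := fun M : 'M[R]_D => M a b)).
    exact: cvg_fst.
  exact: coord_continuous.
have -> : (fun XY => Im (mkC XY a b)) = (fun XY => XY.2 a b).
  by apply: boolp.funext => XY; rewrite mxE.
move=> x; apply: (continuous_comp (f := snd) (g := fun M : 'M[R]_D => M a b)).
  exact: cvg_snd.
exact: coord_continuous.
Qed.

Lemma haar_inv (G : 'M[C]_D -> C) V : Defs.is_unitary V ->
  cQ Qct (fun XY => G (mkC XY)) ->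
  CE P (fun w => G (V *m H w)) = CE P (fun w => G (H w)).
Proof.
move=> hV [c1 c2]; case: hH => _ hinv.
rewrite /CE; apply: complex_eqP => /=.
  have := hinv V hV _ c1 => /=.
  have -> : (fun w => Re (G (mkC (splitRI (V *m H w))))) = (fun w => Re (G (V *m H w))).
    by apply: boolp.funext => w; rewrite mkC_split.
  have -> : (fun w => Re (G (mkC (splitRI (H w))))) = (fun w => Re (G (H w))).
    by apply: boolp.funext => w; rewrite mkC_split.
  by [].
have := hinv V hV _ c2 => /=.
have -> : (fun w => Im (G (mkC (splitRI (V *m H w))))) = (fun w => Im (G (V *m H w))).
  by apply: boolp.funext => w; rewrite mkC_split.
have -> : (fun w => Im (G (mkC (splitRI (H w))))) = (fun w => Im (G (H w))).
  by apply: boolp.funext => w; rewrite mkC_split.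
by [].
Qed.

Lemma twirl2_mul (V A : 'M[C]_D) O :
  twirl2 (V *m A) O = mxtens.tensmx V V *m twirl2 A O *m adj (mxtens.tensmx V V).
Proof.
by rewrite /twirl2 -mxtens.tensmx_mul adj_mul !mulmxA.
Qed.

Definition Mhaar O : 'M[C]_(D * D) := \matrix_(x, y) CE P (fun w => twirl2 (H w) O x y).

Lemma Mhaar_inv O V : Defs.is_unitary V ->
  Mhaar O = mxtens.tensmx V V *m Mhaar O *m adj (mxtens.tensmx V V).
Proof.
move=> hV; set W := mxtens.tensmx V V.
apply/matrixP => x y.
rewrite [LHS]mxE -(haar_inv (G := fun M => twirl2 M O x y) hV); last first.
  exact: (cQ_twirl Qct_closed O Qct_mkC).
rewrite (_ : (fun w => twirl2 (V *m H w) O x y) =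
   (fun w => \sum_q \sum_p ((W x p * adj W q y) * twirl2 (H w) O p q))); last first.
  apply: boolp.funext => w; rewrite twirl2_mul -/W mxE; apply: eq_bigr => q _.
  by rewrite mxE mulr_suml; apply: eq_bigr => p _; rewrite mxE; ring.
rewrite CE_sum; last first.
  move=> q; apply: (cQ_sum (Qmb_closed R T)) => p.
  by apply: (cQM (Qmb_closed R T)); [apply: (cQc (Qmb_closed R T)) | apply: good_tw].
rewrite mxE; apply: eq_bigr => q _.
rewrite CE_sum; last first.
  by move=> p; apply: (cQM (Qmb_closed R T)); [apply: (cQc (Qmb_closed R T)) | apply: good_tw].
rewrite [(W *m _) x q]mxE mulr_suml; apply: eq_bigr => p _.
rewrite CE_mulc; last exact: good_tw.
by rewrite /Mhaar !mxE; ring.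
Qed.

End Haar1.

Section Tens.
Variable R : realType.
Local Notation C := R[i].
Local Notation Re := (@complex.Re R).
Local Notation Im := (@complex.Im R).
Local Notation ix a b := (mxtens.mxtens_index (a, b)).

Lemma sum_one n (a : 'I_n) (g F : 'I_n -> C) :
  (forall p, p != a -> g p = 0) -> \sum_p g p * F p = g a * F a.
Proof.
move=> hg; rewrite (bigD1 a) //= big1 ?addr0 // => p hp.
by rewrite hg ?mul0r.
Qed.

Lemma sum_two n (k l : 'I_n) (g F : 'I_n -> C) : k != l ->
  (forall p, p != k -> p != l -> g p = 0) ->
  \sum_p g p * F p = g k * F k + g l * F l.
Proof.
move=> kl hg; rewrite (bigD1 k) //= (bigD1 l) 1?eq_sym //= big1 ?addr0 // => p.
by move=> /andP[hl hk]; rewrite hg ?mul0r.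
Qed.

Definition Sw n : 'M[C]_(n * n) :=
  \matrix_(x, y) (((mxtens.mxtens_unindex x).1 == (mxtens.mxtens_unindex y).2) &&
                  ((mxtens.mxtens_unindex x).2 == (mxtens.mxtens_unindex y).1))%:R.

Lemma SwE n (a b c d : 'I_n) : Sw n (ix a b) (ix c d) = ((a == d) && (b == c))%:R.
Proof. by rewrite mxE !mxtens.mxtens_indexK. Qed.

Lemma exch4 (W : nmodType) n (F : 'I_n -> 'I_n -> 'I_n -> 'I_n -> W) :
  \sum_r \sum_t \sum_p \sum_q F r t p q = \sum_p \sum_q \sum_r \sum_t F r t p q.
Proof.
transitivity (\sum_r \sum_p \sum_q \sum_t F r t p q).
  apply: eq_bigr => r _; rewrite exchange_big; apply: eq_bigr => p _.
  by rewrite exchange_big.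
by rewrite exchange_big; apply: eq_bigr => p _; rewrite exchange_big.
Qed.

Lemma E4 n (V : 'M[C]_n) (M : 'M[C]_(n * n)) a b c d :
  (mxtens.tensmx V V *m M *m adj (mxtens.tensmx V V)) (ix a b) (ix c d) =
  \sum_p V a p * \sum_q V b q * \sum_r Num.conj (V c r) *
     \sum_t Num.conj (V d t) * M (ix p q) (ix r t).
Proof.
transitivity (\sum_r \sum_t \sum_p \sum_q
   (V a p * (V b q * (Num.conj (V c r) * (Num.conj (V d t) * M (ix p q) (ix r t)))))).
  rewrite mxE sum_tens; apply: eq_bigr => r _; apply: eq_bigr => t _.
  rewrite mxE sum_tens mulr_suml; apply: eq_bigr => p _.
  rewrite mulr_suml; apply: eq_bigr => q _.
  by rewrite adjE !mxtens.tensmxE rmorphM; ring.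
rewrite exch4; apply: eq_bigr => p _; rewrite !mulr_sumr; apply: eq_bigr => q _.
rewrite !mulr_sumr; apply: eq_bigr => r _; rewrite !mulr_sumr; apply: eq_bigr => t _.
by [].
Qed.

Lemma sum_eq1 n (a : 'I_n) (F : 'I_n -> C) : \sum_p (a == p)%:R * F p = F a.
Proof.
rewrite (sum_one (a := a)) ?eqxx ?mul1r // => p; rewrite eq_sym => /negbTE ->.
by [].
Qed.

Lemma sum_eq2 n (a : 'I_n) (F : 'I_n -> C) : \sum_p (p == a)%:R * F p = F a.
Proof.
rewrite (sum_one (a := a)) ?eqxx ?mul1r // => p /negbTE ->.
by [].
Qed.

Lemma trE n (X : 'M[C]_(n * n)) : \tr X = \sum_k \sum_l X (ix k l) (ix k l).
Proof. by rewrite /mxtrace sum_tens. Qed.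

Lemma trSE n (X : 'M[C]_(n * n)) :
  \tr (X *m Sw n) = \sum_k \sum_l X (ix k l) (ix l k).
Proof.
rewrite trE; apply: eq_bigr => a _; apply: eq_bigr => b _.
rewrite mxE sum_tens.
transitivity (\sum_c (c == b)%:R * \sum_d (d == a)%:R * X (ix a b) (ix c d)).
  apply: eq_bigr => c _; rewrite mulr_sumr; apply: eq_bigr => d _.
  by rewrite SwE -mulnb natrM; ring.
by rewrite sum_eq2 sum_eq2.
Qed.

Lemma Sw_comm n (A : 'M[C]_n) :
  Sw n *m mxtens.tensmx A A = mxtens.tensmx A A *m Sw n.
Proof.
apply/matrixP => x y.
case: (mxtens.mxtens_indexP x) => a b; case: (mxtens.mxtens_indexP y) => c d.
rewrite !mxE !sum_tens.
transitivity (\sum_p (b == p)%:R * \sum_q (a == q)%:R * (A p c * A q d)).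
  apply: eq_bigr => p _; rewrite mulr_sumr; apply: eq_bigr => q _.
  by rewrite SwE mxtens.tensmxE -mulnb natrM; ring.
transitivity (\sum_p (p == d)%:R * \sum_q (q == c)%:R * (A a p * A b q)); last first.
  apply: eq_bigr => p _; rewrite mulr_sumr; apply: eq_bigr => q _.
  by rewrite SwE mxtens.tensmxE -mulnb natrM; ring.
by rewrite sum_eq1 sum_eq1 sum_eq2 sum_eq2 mulrC.
Qed.

Lemma tr_twirl n (U : 'M[C]_n) O : Defs.is_unitary U -> \tr (twirl2 U O) = \tr O.
Proof.
move=> hU; rewrite /twirl2 mxtrace_mulC mulmxA unitary_tensC //.
by rewrite mul1mx.
Qed.

Lemma trS_twirl n (U : 'M[C]_n) O : Defs.is_unitary U ->
  \tr (twirl2 U O *m Sw n) = \tr (O *m Sw n).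
Proof.
move=> hU; rewrite /twirl2 -!mulmxA adj_tens -Sw_comm -adj_tens.
rewrite mxtrace_mulC -!mulmxA unitary_tensC //.
by rewrite mulmx1.
Qed.

End Tens.

Section Alg.
Variable R : realType.
Local Notation C := R[i].
Local Notation Re := (@complex.Re R).
Local Notation Im := (@complex.Im R).
Local Notation ix a b := (mxtens.mxtens_index (a, b)).

Definition monomx n (s : 'I_n -> 'I_n) (e : 'I_n -> C) : 'M[C]_n :=
  \matrix_(a, p) ((p == s a)%:R * e a).

Lemma monomx_unitary n (s : 'I_n -> 'I_n) e : injective s ->
  (forall a, e a * Num.conj (e a) = 1) -> Defs.is_unitary (monomx s e).
Proof.
move=> si he; apply/matrixP => a b; rewrite !mxE.
rewrite (sum_one (a := s a)); last first.
  by move=> p hp; rewrite mxE (negbTE hp) mul0r.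
rewrite !mxE eqxx mul1r (inj_eq si) rmorphM /=.
by case: (a =P b) => [<-|_]; rewrite /= ?rmorph1 ?rmorph0 ?mul1r ?mul0r ?mulr0.
Qed.

Variable D : nat.
Variable M : 'M[C]_(D * D).
Hypothesis hM : forall V : 'M[C]_D, Defs.is_unitary V ->
  M = mxtens.tensmx V V *m M *m adj (mxtens.tensmx V V).

Lemma M_mono (s : 'I_D -> 'I_D) e : injective s ->
  (forall a, e a * Num.conj (e a) = 1) -> forall a b c d,
  M (ix a b) (ix c d) =
  e a * e b * Num.conj (e c) * Num.conj (e d) * M (ix (s a) (s b)) (ix (s c) (s d)).
Proof.
move=> si he a b c d.
rewrite {1}(hM (monomx_unitary si he)) E4.
have h1 : forall x p, p != s x -> monomx s e x p = 0.
  by move=> x p hp; rewrite mxE (negbTE hp) mul0r.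
have h2 : forall x p, p != s x -> Num.conj (monomx s e x p) = 0.
  by move=> x p hp; rewrite h1 // rmorph0.
rewrite (sum_one (a := s a)); last exact: h1. rewrite /=.
rewrite (sum_one (a := s b)); last exact: h1. rewrite /=.
rewrite (sum_one (a := s c) (g := fun r => Num.conj (monomx s e c r))); last exact: h2.
rewrite (sum_one (a := s d) (g := fun r => Num.conj (monomx s e d r))); last exact: h2.

by rewrite !mxE !eqxx !mul1r; ring.
Qed.

Lemma van (m z : C) : m = z * m -> Re z != 1 -> m = 0.
Proof.
move=> h hz; have : (1 - z) * m = 0 by rewrite mulrBl mul1r -h subrr.
move/eqP; rewrite mulf_eq0 => /orP[/eqP e0|/eqP //].
by move/eqP: e0; rewrite subr_eq0 => /eqP zE; move: hz; rewrite -zE eqxx.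
Qed.

Section KL.
Variables k l : 'I_D.
Hypothesis hkl : k != l.

Definition ph (a : 'I_D) : C := if a == k then Complex 0 1 else 1.

Lemma ph_unit a : ph a * Num.conj (ph a) = 1.
Proof.
rewrite /ph; case: (a == k); last by rewrite rmorph1 mulr1.
by apply: complex_eqP; rewrite ?(ReM, ImM, ReJ, ImJ) /=; lra.
Qed.

Lemma phk : ph k = Complex 0 1. Proof. by rewrite /ph eqxx. Qed.
Lemma phl : ph l = 1. Proof. by rewrite /ph eq_sym (negbTE hkl). Qed.

Lemma M_van a b c d : Re (ph a * ph b * Num.conj (ph c) * Num.conj (ph d)) != 1 ->
  M (ix a b) (ix c d) = 0.
Proof.
move=> h; apply: van h.
exact: (M_mono (s := id) (e := ph) (@inj_id _) ph_unit a b c d).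
Qed.

Definition swp (a : 'I_D) := if a == k then l else if a == l then k else a.

Lemma swpK : involutive swp.
Proof.
move=> a; rewrite /swp; case: (a =P k) => [->|ak].
  by rewrite eq_sym (negbTE hkl) eqxx.
case: (a =P l) => [->|al]; first by rewrite eqxx.
by move/eqP/negbTE: ak => ->; move/eqP/negbTE: al => ->.
Qed.

Lemma swpk : swp k = l. Proof. by rewrite /swp eqxx. Qed.
Lemma swpl : swp l = k. Proof. by rewrite /swp eq_sym (negbTE hkl) eqxx. Qed.

Lemma M_swap a b c d :
  M (ix a b) (ix c d) = M (ix (swp a) (swp b)) (ix (swp c) (swp d)).
Proof.
rewrite (M_mono (s := swp) (e := fun _ => 1) (inv_inj swpK)) //.
  by rewrite rmorph1 !mul1r.
by move=> _; rewrite rmorph1 mulr1.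
Qed.

Definition alpha : C := 3%:R / 5%:R.
Definition beta : C := 4%:R / 5%:R.

Lemma n5 : (5%:R : C) != 0. Proof. by rewrite pnatr_eq0. Qed.

Definition rot : 'M[C]_D := \matrix_(a, p)
  (if a == k then (if p == k then alpha else if p == l then beta else 0)
   else if a == l then (if p == k then beta else if p == l then - alpha else 0)
   else (p == a)%:R).

Lemma rot_kk : rot k k = alpha. Proof. by rewrite mxE !eqxx. Qed.
Lemma rot_kl : rot k l = beta.
Proof. by rewrite mxE eqxx eq_sym (negbTE hkl) eqxx. Qed.
Lemma rot_lk : rot l k = beta.
Proof. by rewrite mxE eq_sym (negbTE hkl) !eqxx. Qed.
Lemma rot_ll : rot l l = - alpha.
Proof. by rewrite mxE eq_sym (negbTE hkl) !eqxx. Qed.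
Lemma rot_k0 p : p != k -> p != l -> rot k p = 0.
Proof. by move=> /negbTE pk /negbTE pl; rewrite mxE eqxx pk pl. Qed.
Lemma rot_l0 p : p != k -> p != l -> rot l p = 0.
Proof. by move=> /negbTE pk /negbTE pl; rewrite mxE eq_sym (negbTE hkl) eqxx pk pl. Qed.
Lemma rot_o a p : a != k -> a != l -> rot a p = (p == a)%:R.
Proof. by move=> /negbTE ak /negbTE al; rewrite mxE ak al. Qed.

Lemma conj_alpha : Num.conj alpha = alpha.
Proof. by rewrite /alpha fmorph_div !rmorph_nat. Qed.
Lemma conj_beta : Num.conj beta = beta.
Proof. by rewrite /beta fmorph_div !rmorph_nat. Qed.

Lemma conjN (x : C) : Num.conj (- x) = - Num.conj x.
Proof. exact: rmorphN. Qed.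

Lemma rot_conj a p : Num.conj (rot a p) = rot a p.
Proof.
rewrite mxE; repeat case: ifP => _;
  by rewrite ?rmorph0 ?conjN ?conj_alpha ?conj_beta ?rmorph_nat.
Qed.

Lemma rot_unitary : Defs.is_unitary rot.
Proof.
apply/matrixP => a b; rewrite !mxE.
under eq_bigr do rewrite adjE rot_conj.
case: (eqVneq a k) => [->|ak].
  rewrite (sum_two (g := fun p => rot k p) _ hkl); last exact: rot_k0.
  rewrite rot_kk rot_kl.
  case: (eqVneq b k) => [->|bk].
    by rewrite rot_kk rot_kl ?eqxx /alpha /beta/=; field.
  case: (eqVneq b l) => [->|bl].
    by rewrite rot_lk rot_ll ?(negbTE hkl)/=; ring.
  by rewrite !rot_o // ?(eq_sym k b) ?(eq_sym l b) ?(negbTE bk) ?(negbTE bl)/=; ring.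
case: (eqVneq a l) => [->|al].
  rewrite (sum_two (g := fun p => rot l p) _ hkl); last exact: rot_l0.
  rewrite rot_lk rot_ll.
  case: (eqVneq b k) => [->|bk].
    by rewrite rot_kk rot_kl eq_sym ?(negbTE hkl)/=; ring.
  case: (eqVneq b l) => [->|bl].
    by rewrite rot_lk rot_ll ?eqxx /alpha /beta/=; field.
  by rewrite !rot_o // ?(eq_sym k b) ?(eq_sym l b) ?(negbTE bk) ?(negbTE bl)/=; ring.
rewrite (sum_one (g := fun p => rot a p) (a := a)); last first.
  by move=> p pa; rewrite rot_o // (negbTE pa).
rewrite [rot a a]rot_o // eqxx mul1r.
case: (eqVneq b k) => [->|bk]; first by rewrite rot_k0 // ?(eq_sym k a) ?(negbTE ak).
case: (eqVneq b l) => [->|bl]; first by rewrite rot_l0 // ?(eq_sym l a) ?(negbTE al).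
by rewrite rot_o.
Qed.

Lemma sumk (F : 'I_D -> C) : \sum_p rot k p * F p = alpha * F k + beta * F l.
Proof. by rewrite (sum_two (g := fun p => rot k p) F hkl) ?rot_kk ?rot_kl //; exact: rot_k0. Qed.

Lemma sumkc (F : 'I_D -> C) :
  \sum_p Num.conj (rot k p) * F p = alpha * F k + beta * F l.
Proof.
rewrite (sum_two (g := fun p => Num.conj (rot k p)) F hkl) ?rot_conj ?rot_kk ?rot_kl //.
by move=> p h1 h2; rewrite rot_k0 // rmorph0.
Qed.

Ltac reZ := rewrite ?phk ?phl ?(ReM, ImM, ReJ, ImJ, Re1, Im1) /=; apply/eqP; lra.

Lemma M_rot : M (ix k k) (ix k k) = M (ix k l) (ix k l) + M (ix k l) (ix l k).
Proof.
have h := congr1 (fun X : 'M[C]_(D * D) => X (ix k k) (ix k k)) (hM rot_unitary).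
rewrite /= E4 in h.
rewrite !sumk in h; rewrite !sumkc in h.
have z1 : M (ix k k) (ix k l) = 0 by apply: M_van; reZ.
have z2 : M (ix k k) (ix l k) = 0 by apply: M_van; reZ.
have z3 : M (ix k k) (ix l l) = 0 by apply: M_van; reZ.
have z4 : M (ix k l) (ix k k) = 0 by apply: M_van; reZ.
have z5 : M (ix k l) (ix l l) = 0 by apply: M_van; reZ.
have z6 : M (ix l k) (ix k k) = 0 by apply: M_van; reZ.
have z7 : M (ix l k) (ix l l) = 0 by apply: M_van; reZ.
have z8 : M (ix l l) (ix k k) = 0 by apply: M_van; reZ.
have z9 : M (ix l l) (ix k l) = 0 by apply: M_van; reZ.
have z10 : M (ix l l) (ix l k) = 0 by apply: M_van; reZ.
have s1 : M (ix l l) (ix l l) = M (ix k k) (ix k k) by rewrite M_swap swpl.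
have s2 : M (ix l k) (ix l k) = M (ix k l) (ix k l) by rewrite M_swap swpl swpk.
have s3 : M (ix l k) (ix k l) = M (ix k l) (ix l k) by rewrite M_swap swpl swpk.
rewrite z1 z2 z3 z4 z5 z6 z7 z8 z9 z10 s1 s2 s3 in h.
move: h; set c := M (ix k k) (ix k k); set x := M (ix k l) (ix k l);
  set y := M (ix k l) (ix l k) => h.
move/eqP: h; rewrite -subr_eq0 => /eqP h.
have e : (288%:R / 625%:R : C) * (c - (x + y)) = 0.
  by rewrite -h /alpha /beta; field.
move/eqP: e; rewrite mulf_eq0 => /orP[|]; last by rewrite subr_eq0 => /eqP.
by rewrite mulf_eq0 invr_eq0 !pnatr_eq0.
Qed.

End KL.

Lemma M_sum : (D + 1)%:R * \sum_s M (ix s s) (ix s s) = \tr M + \tr (M *m Sw R D).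
Proof.
rewrite trE trSE -big_split /= mulr_sumr; apply: eq_bigr => k _.
rewrite -big_split /=.
have e : forall l, M (ix k l) (ix k l) + M (ix k l) (ix l k) =
   M (ix k k) (ix k k) + (l == k)%:R * M (ix k k) (ix k k).
  move=> l; case: (eqVneq l k) => [->|lk]; first by rewrite mul1r.
  by rewrite mul0r addr0 (M_rot (k := k) (l := l)) // eq_sym.
under eq_bigr do rewrite e.
rewrite big_split /= sum_eq2 sumr_const card_ord.
by rewrite natrD mulrDl mul1r mulr_natl.
Qed.

End Alg.

Section Haar2.
Variable R : realType.
Local Notation C := R[i].
Local Notation ix a b := (mxtens.mxtens_index (a, b)).
Variable d : measure_display.
Variable T : measurableType d.
Variable P : probability T R.
Variable D : nat.
Variable H : T -> 'M[C]_D.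
Hypothesis hH : is_haar P H.

Lemma H_unitary w : Defs.is_unitary (H w).
Proof. by case: hH => -[hu _] _; apply: hu. Qed.

Lemma Mhaar_tr O : \tr (Mhaar P H O) = \tr O.
Proof.
rewrite /mxtrace.
under eq_bigr do rewrite mxE.
rewrite -CE_sum; last by move=> x; apply: (good_tw hH).
rewrite -[RHS](CE_cst P); congr (CE P _); apply: boolp.funext => w.
exact: (tr_twirl O (H_unitary w)).
Qed.

Lemma good_twS O x y : good (fun w => (twirl2 (H w) O *m Sw R D) x y).
Proof.
apply: (cQmx_mul (Qmb_closed R T)); last exact: (cQmx_cst (Qmb_closed R T)).
exact: (cQ_twirl (Qmb_closed R T) O (good_H hH)).
Qed.

Lemma Mhaar_trS O : \tr (Mhaar P H O *m Sw R D) = \tr (O *m Sw R D).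
Proof.
transitivity (CE P (fun w => \tr (twirl2 (H w) O *m Sw R D))); last first.
  rewrite -[RHS](CE_cst P); congr (CE P _); apply: boolp.funext => w.
  exact: (trS_twirl O (H_unitary w)).
rewrite /mxtrace CE_sum; last by move=> x; apply: good_twS.
apply: eq_bigr => x _; rewrite [LHS]mxE.
rewrite (_ : (fun w => (twirl2 (H w) O *m Sw R D) x x) =
   (fun w => \sum_y Sw R D y x * twirl2 (H w) O x y)); last first.
  by apply: boolp.funext => w; rewrite mxE; apply: eq_bigr => y _; rewrite mulrC.
rewrite CE_sum; last first.
  move=> y; apply: (cQM (Qmb_closed R T)); last exact: (good_tw hH).
  exact: (cQc (Qmb_closed R T)).
apply: eq_bigr => y _.
rewrite CE_mulc; last exact: (good_tw hH).
by rewrite /Mhaar mxE mulrC.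
Qed.

Lemma haar_sum O :
  (D + 1)%:R * \sum_s CE P (fun w => twirl2 (H w) O (ix s s) (ix s s)) =
  \tr O + \tr (O *m Sw R D).
Proof.
have := M_sum (fun V hV => Mhaar_inv hH O hV).
rewrite Mhaar_tr Mhaar_trS => <-; congr (_ * _).
by apply: eq_bigr => s _; rewrite mxE.
Qed.

End Haar2.

Section Deriv.
Variable R : realType.
Local Notation C := R[i].
Local Notation Re := (@complex.Re R).
Local Notation Im := (@complex.Im R).
Variable m : nat.
Variables x v : 'rV[R]_m.

Lemma isdD (f g : 'rV[R]_m -> R) df dg : is_derive x v f df -> is_derive x v g dg ->
  is_derive x v (fun t => f t + g t) (df + dg).
Proof. by move=> hf hg; exact: is_deriveD. Qed.

Lemma isdM (f g : 'rV[R]_m -> R) df dg : is_derive x v f df -> is_derive x v g dg ->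
  is_derive x v (fun t => f t * g t) (f x * dg + g x * df).
Proof. by move=> hf hg; exact: is_deriveM. Qed.

Lemma isdN (f : 'rV[R]_m -> R) df : is_derive x v f df ->
  is_derive x v (fun t => - f t) (- df).
Proof. by move=> hf; exact: is_deriveN. Qed.

Lemma isdc (c : R) : is_derive x v (fun _ : 'rV[R]_m => c) 0.
Proof. exact: is_derive_cst. Qed.

Definition cder (F : 'rV[R]_m -> C) (dF : C) :=
  is_derive x v (fun t => Re (F t)) (Re dF) /\ is_derive x v (fun t => Im (F t)) (Im dF).

Lemma cderD F G dF dG : cder F dF -> cder G dG -> cder (fun t => F t + G t) (dF + dG).
Proof.
move=> [f1 f2] [g1 g2]; split.
  have -> : (fun t => Re (F t + G t)) = (fun t => Re (F t) + Re (G t)).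
    by apply: boolp.funext => t; rewrite ReD.
  by rewrite ReD; apply: isdD.
have -> : (fun t => Im (F t + G t)) = (fun t => Im (F t) + Im (G t)).
  by apply: boolp.funext => t; rewrite ImD.
by rewrite ImD; apply: isdD.
Qed.

Lemma cderM F G dF dG : cder F dF -> cder G dG ->
  cder (fun t => F t * G t) (F x * dG + G x * dF).
Proof.
move=> [f1 f2] [g1 g2]; split.
  have -> : (fun t => Re (F t * G t)) =
     (fun t => Re (F t) * Re (G t) + - (Im (F t) * Im (G t))).
    by apply: boolp.funext => t; rewrite ReM.
  apply: (is_derive_eq (isdD (isdM f1 g1) (isdN (isdM f2 g2)))).
  by rewrite ReD !ReM /=; ring.
have -> : (fun t => Im (F t * G t)) =
   (fun t => Re (F t) * Im (G t) + Im (F t) * Re (G t)).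
  by apply: boolp.funext => t; rewrite ImM.
apply: (is_derive_eq (isdD (isdM f1 g2) (isdM f2 g1))).
by rewrite ImD !ImM /=; ring.
Qed.

Lemma cderJ F dF : cder F dF -> cder (fun t => Num.conj (F t)) (Num.conj dF).
Proof.
move=> [f1 f2]; split.
  have -> : (fun t => Re (Num.conj (F t))) = (fun t => Re (F t)).
    by apply: boolp.funext => t; rewrite ReJ.
  by rewrite ReJ.
have -> : (fun t => Im (Num.conj (F t))) = (fun t => - Im (F t)).
  by apply: boolp.funext => t; rewrite ImJ.
by rewrite ImJ; apply: isdN.
Qed.

Lemma cderc (c : C) : cder (fun _ => c) 0.
Proof. by split; apply: isdc. Qed.

Lemma cder_sum I (r : seq I) (P : pred I) (F : I -> 'rV[R]_m -> C) (dF : I -> C) :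
  (forall i, cder (F i) (dF i)) ->
  cder (fun t => \sum_(i <- r | P i) F i t) (\sum_(i <- r | P i) dF i).
Proof.
move=> hF; elim: r => [|a r IH].
  have -> : (fun t => \sum_(i <- [::] | P i) F i t) = (fun _ => 0).
    by apply: boolp.funext => t; rewrite big_nil.
  by rewrite big_nil; apply: cderc.
rewrite big_cons; case Pa: (P a).
  have -> : (fun t => \sum_(i <- a :: r | P i) F i t) =
     (fun t => F a t + \sum_(i <- r | P i) F i t).
    by apply: boolp.funext => t; rewrite big_cons Pa.
  exact: cderD.
have -> : (fun t => \sum_(i <- a :: r | P i) F i t) =
   (fun t => \sum_(i <- r | P i) F i t).
  by apply: boolp.funext => t; rewrite big_cons Pa.
exact: IH.
Qed.

Lemma cder_quad D (phi : 'rV[R]_m -> 'cV[C]_D) (dphi : 'cV[C]_D) (M : 'M[C]_D) :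
  (forall a, cder (fun t => phi t a 0) (dphi a 0)) ->
  cder (fun t => (adj (phi t) *m M *m phi t) 0 0)
       ((adj dphi *m M *m phi x + adj (phi x) *m M *m dphi) 0 0).
Proof.
move=> hb.
have -> : (fun t => (adj (phi t) *m M *m phi t) 0 0) =
   (fun t => \sum_b \sum_a (Num.conj (phi t a 0) * M a b) * phi t b 0).
  apply: boolp.funext => t; rewrite mxE; apply: eq_bigr => b _.
  by rewrite mxE mulr_suml; apply: eq_bigr => a _; rewrite adjE.
have cder_eq : forall F d1 d2, cder F d1 -> d1 = d2 -> cder F d2 by move=> ? ? ? ? <-.
apply: cder_eq.
  apply: cder_sum => b; apply: cder_sum => a.
  exact: (cderM (cderM (cderJ (hb a)) (cderc (M a b))) (hb b)).
rewrite /= !mxE -big_split /=; apply: eq_bigr => b _.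
rewrite !mxE !mulr_suml -big_split /=; apply: eq_bigr => a _.
by rewrite ?mxE ?adjE; ring.
Qed.

End Deriv.

Section Fin.
Variable R : realType.
Local Notation C := R[i].
Local Notation Re := (@complex.Re R).
Local Notation Im := (@complex.Im R).
Local Notation ix a b := (mxtens.mxtens_index (a, b)).

Lemma Re_natr n : Re (n%:R : C) = n%:R.
Proof. by elim: n => // n IH; rewrite !mulrSr ReD IH. Qed.
Lemma Im_natr n : Im (n%:R : C) = 0.
Proof. by elim: n => // n IH; rewrite !mulrSr ImD IH addr0. Qed.

Lemma mx11E (A B : 'M[C]_1) : (A *m B) 0 0 = A 0 0 * B 0 0.
Proof. by rewrite mxE big_ord1. Qed.

Lemma tr11 (A : 'M[C]_1) : \tr A = A 0 0.
Proof. by rewrite /mxtrace big_ord1. Qed.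

Lemma conjM' (x y : C) : Num.conj (x * y) = Num.conj x * Num.conj y.
Proof. exact: rmorphM. Qed.

Lemma conj_sum' I (r : seq I) (P : pred I) (F : I -> C) :
  Num.conj (\sum_(i <- r | P i) F i) = \sum_(i <- r | P i) Num.conj (F i).
Proof. exact: rmorph_sum. Qed.

Lemma dotJ n (x y : 'cV[C]_n) : (adj x *m y) 0 0 = Num.conj ((adj y *m x) 0 0).
Proof.
rewrite !mxE conj_sum'; apply: eq_bigr => a _.
by rewrite !adjE conjM' conjCK mulrC.
Qed.

Lemma tr_tens n (X Y : 'M[C]_n) : \tr (mxtens.tensmx X Y) = \tr X * \tr Y.
Proof.
rewrite trE /mxtrace mulr_suml; apply: eq_bigr => a _.
rewrite mulr_sumr; apply: eq_bigr => b _.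
by rewrite mxtens.tensmxE.
Qed.

Lemma trS_tens n (X Y : 'M[C]_n) :
  \tr (mxtens.tensmx X Y *m Sw R n) = \tr (X *m Y).
Proof.
rewrite trSE /mxtrace; apply: eq_bigr => a _.
by rewrite mxE; apply: eq_bigr => b _; rewrite mxtens.tensmxE.
Qed.

Lemma tr_rk n (x y : 'cV[C]_n) : \tr (x *m adj y) = (adj y *m x) 0 0.
Proof. by rewrite mxtrace_mulC tr11. Qed.

Lemma tr_rk2 n (x y z w : 'cV[C]_n) :
  \tr (x *m adj y *m (z *m adj w)) = (adj y *m z) 0 0 * (adj w *m x) 0 0.
Proof.
rewrite -mulmxA mxtrace_mulC tr11 !mulmxA.
by rewrite -(mulmxA (adj y *m z)) mx11E.
Qed.

Lemma entry_rk n (U : 'M[C]_n) (x y : 'cV[C]_n) s :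
  (U *m (x *m adj y) *m adj U) s s = (U *m x) s 0 * Num.conj ((U *m y) s 0).
Proof. by rewrite mulmxA -mulmxA -adj_mul mxE big_ord1 adjE. Qed.

Lemma twirl_rk n (U : 'M[C]_n) (a b c e : 'cV[C]_n) s :
  twirl2 U (mxtens.tensmx (a *m adj b) (c *m adj e)) (ix s s) (ix s s) =
  (U *m a) s 0 * Num.conj ((U *m b) s 0) * ((U *m c) s 0 * Num.conj ((U *m e) s 0)).
Proof.
rewrite /twirl2 adj_tens !mxtens.tensmx_mul mxtens.tensmxE.
by rewrite !entry_rk.
Qed.

Lemma twirl_lin n (U : 'M[C]_n) (c : C) O1 O2 x y :
  twirl2 U (c *: (O1 + O2)) x y = c * (twirl2 U O1 x y + twirl2 U O2 x y).
Proof.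
by rewrite /twirl2 -scalemxAr mulmxDr -scalemxAl mulmxDl !mxE.
Qed.

Lemma quadE n (U : 'M[C]_n) s (x y : 'cV[C]_n) :
  (adj x *m (adj U *m delta_mx s s *m U) *m y) 0 0 =
  Num.conj ((U *m x) s 0) * (U *m y) s 0.
Proof.
rewrite !mulmxA -adj_mul -!mulmxA mxE (bigD1 s) //= big1 ?addr0; last first.
  move=> a /negbTE h; rewrite [(delta_mx _ _ *m _) _ _]mxE big1 ?mulr0 // => b _.
  by rewrite mxE h mul0r.
rewrite adjE [(delta_mx _ _ *m _) _ _]mxE (bigD1 s) //= big1 ?addr0; last first.
  by move=> b /negbTE h; rewrite mxE h andbF mul0r.
by rewrite [delta_mx _ _ _ _]mxE !eqxx mul1r.
Qed.

Lemma Re2M (z : C) : Re (2%:R * z) = 2%:R * Re z.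
Proof. by rewrite ReM Re_natr Im_natr mul0r subr0. Qed.

Lemma pt_alg (a b c : C) :
  Re (Num.conj a * c + Num.conj c * a) * Re (Num.conj b * c + Num.conj c * b) =
  Re (2%:R * (a * Num.conj c * (b * Num.conj c) + a * Num.conj c * (c * Num.conj b))).
Proof.
rewrite Re2M !(ReM, ImM, ReD, ImD, ReJ, ImJ); ring.
Qed.

Lemma final_alg n (u v psi : 'cV[C]_n) :
  Re ((adj psi *m u) 0 0) = 0 -> Re ((adj psi *m v) 0 0) = 0 ->
  4 * Re ((adj u *m v) 0 0 - (adj u *m psi *m adj psi *m v) 0 0) =
  2 * Re (2%:R * ((adj psi *m u) 0 0 * (adj psi *m v) 0 0 +
                  (adj psi *m u) 0 0 * (adj v *m psi) 0 0) +
          2%:R * ((adj psi *m v) 0 0 * (adj psi *m u) 0 0 + (adj v *m u) 0 0)).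
Proof.
move=> ra rb.
rewrite -(mulmxA (adj u *m psi)) mx11E (dotJ u psi) (dotJ v psi) (dotJ v u).
move: ra rb; move: ((adj psi *m u) 0 0) ((adj psi *m v) 0 0) ((adj u *m v) 0 0) => a b c ra rb.
rewrite [in RHS]ReD !Re2M !(ReM, ImM, ReD, ImD, ReJ, ImJ, ReN, ImN) ra rb; ring.
Qed.

End Fin.

Section Main.
Variable R : realType.
Local Notation C := R[i].
Local Notation Re := (@complex.Re R).
Local Notation Im := (@complex.Im R).
Local Notation ix a b := (mxtens.mxtens_index (a, b)).
Variables m D : nat.
Variable phi : 'rV[R]_m -> 'cV[C]_D.
Hypothesis hs : smooth_state phi.
Variable theta : 'rV[R]_m.

Lemma cder_base (i : 'I_m) a :
  cder theta (delta_mx 0 i) (fun t => phi t a 0) (dstate i phi theta a 0).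
Proof.
split.
  have hd : differentiable (fun t => Re (phi t a 0)) theta := (hs a).1 [::] theta.
  have := derivableP (diff_derivable (v := delta_mx 0 i) hd).
  by rewrite /dstate mxE.
have hd : differentiable (fun t => Im (phi t a 0)) theta := (hs a).2 [::] theta.
have := derivableP (diff_derivable (v := delta_mx 0 i) hd).
by rewrite /dstate mxE.
Qed.

Lemma pd_quad (i : 'I_m) (M : 'M[C]_D) :
  pd i (fun t => Re ((adj (phi t) *m M *m phi t) 0 0)) theta =
  Re ((adj (dstate i phi theta) *m M *m phi theta +
       adj (phi theta) *m M *m dstate i phi theta) 0 0).
Proof.
have [h _] := cder_quad M (fun a => cder_base i a).
by case: h.
Qed.

Lemma pd_pU (i : 'I_m) (U : 'M[C]_D) s :
  pd i (pU s U phi) theta =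
  Re (Num.conj ((U *m dstate i phi theta) s 0) * (U *m phi theta) s 0 +
      Num.conj ((U *m phi theta) s 0) * (U *m dstate i phi theta) s 0).
Proof.
rewrite (_ : pU s U phi =
  fun t => Re ((adj (phi t) *m (adj U *m delta_mx s s *m U) *m phi t) 0 0)); last first.
  by apply: boolp.funext => t; rewrite /pU !mulmxA.
by rewrite pd_quad mxE !quadE.
Qed.

Hypothesis hnorm : forall t, adj (phi t) *m phi t = 1%:M.

Lemma Re_alpha (i : 'I_m) : Re ((adj (phi theta) *m dstate i phi theta) 0 0) = 0.
Proof.
have [h _] := cder_quad 1%:M (fun a => cder_base i a).
have e : (fun t => Re ((adj (phi t) *m 1%:M *m phi t) 0 0)) = (fun _ => 1).
  by apply: boolp.funext => t; rewrite mulmx1 hnorm mxE.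
move: h; rewrite e => -[_].
rewrite derive_cst !mulmx1 mxE ReD dotJ ReJ => /eqP.
by move=> /eqP h; lra.
Qed.

End Main.

Unset Implicit Arguments.

Theorem corollary1 (R : realType) (n m : nat) (hn : (0 < n)%N)
  (phi : 'rV[R]_m -> 'cV[R[i]]_(2 ^ n))
  (hsmooth : smooth_state phi)
  (hnorm : forall theta : 'rV[R]_m, adj (phi theta) *m phi theta = 1%:M)
  (d : measure_display) (T : measurableType d) (P : probability T R)
  (U : T -> 'M[R[i]]_(2 ^ n))
  (hdesign : is_2design P U)
  (theta : 'rV[R]_m) (i j : 'I_m) :
  QFI phi theta i j
  = 2 * (2 ^ n + 1)%:R *
    \sum_(s < 2 ^ n)
      \int[P]_w (pd i (pU s (U w) phi) theta * pd j (pU s (U w) phi) theta).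
Proof.
case: hdesign => _ [d' [T' [P' [H [hH hE]]]]].
set psi := phi theta; set u := dstate i phi theta; set v := dstate j phi theta.
pose O : 'M[R[i]]_(2 ^ n * 2 ^ n) := 2%:R *: (mxtens.tensmx (u *m adj psi) (v *m adj psi) +
   mxtens.tensmx (u *m adj psi) (psi *m adj v)).
have pt : forall (V : 'M[R[i]]_(2 ^ n)) s,
    pd i (pU s V phi) theta * pd j (pU s V phi) theta =
    complex.Re (twirl2 V O (mxtens.mxtens_index (s, s)) (mxtens.mxtens_index (s, s))).
  move=> V s; rewrite !pd_pU // twirl_lin !twirl_rk -/psi -/u -/v.
  exact: pt_alg.
have hsum : forall s : 'I_(2 ^ n),
    \int[P]_w (pd i (pU s (U w) phi) theta * pd j (pU s (U w) phi) theta) =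
    complex.Re (CE P' (fun w => twirl2 (H w) O (mxtens.mxtens_index (s, s))
                                            (mxtens.mxtens_index (s, s)))).
  move=> s; rewrite -hE /CE /=; apply: eq_Rintegral => w _; exact: pt.
rewrite (eq_bigr _ (fun s _ => hsum s)).
have hs2 := haar_sum hH O.
transitivity (2 * complex.Re (\tr O + \tr (O *m Sw R (2 ^ n)))); last first.
  rewrite -hs2 ReM Re_natr Im_natr mul0r subr0 Re_sum.
  by rewrite mulrA.
rewrite /O mxtraceZ mxtraceD !tr_tens !tr_rk.
rewrite -scalemxAl mulmxDl mxtraceZ mxtraceD !trS_tens !tr_rk2.
rewrite hnorm [1%:M _ _]mxE eqxx mulr1n mul1r.
apply: final_alg; exact: Re_alpha.
Qed.
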